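(* Let $(X,\sigma,T)$ be as in the context and let $\pi^L_{eq}:L\to L_{eq}$ be the maximal equicontinuous factor of the minimal system $(L,\sigma_L)$, with the group structure on $L_{eq}$ chosen so that $e_{eq}:=\pi^L_{eq}(e)$ is the neutral element. Then $\pi^L_{eq}$ is a semigroup morphism, $\pi^L_{eq}(f)=\pi^L_{eq}(ef)$ for all $f\in L$, and there is a closed normal subgroup $H$ of $\mathcal G$ with $\Gamma\subset H$ such that $\pi^L_{eq}(f)\mapsto efH$ is a well-defined group isomorphism $L_{eq}\cong \mathcal G/H$; i.e. the map $L\ni f\mapsto ef \bmod H\in\mathcal G/H$ is a maximal equicontinuous factor of $(L,\sigma_L)$.
   Context: $T$ is an abelian group acting continuously by $\sigma$ on a compact Hausdorff space $X$; the action is minimal and not distal. The Ellis semigroup $E(X)$ is the closure of $\{\sigma^t:t\in T\}$ in $X^X$ (pointwise convergence, composition), with $T$-action $\sigma_E^t(f)=\sigma^t\circ f$. Fix a minimal idempotent $e\in E(X)$, put $L=E(X)e$ (a minimal left ideal; $\sigma_L$ denotes the restriction of $\sigma_E$ to $L$, and $(L,\sigma_L)$ is minimal) and $\mathcal G=eL=eE(X)e$ (a group with identity $e$), with the subspace topology. The kernel (smallest two-sided ideal) of $E(X)$ is completely simple, hence isomorphic to a Rees matrix semigroup with structure group $\mathcal G$; the little structure group $\Gamma\subset \mathcal G$ is the subgroup generated by the entries of its sandwich matrix; equivalently $\Gamma$ is the intersection of $\mathcal G$ with the closure of the subsemigroup generated by the minimal idempotents of $E(X)$. *)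

(* Defs.v *)
From HB Require Import structures.
From mathcomp Require Import all_boot all_order all_algebra.
From mathcomp Require Import all_classical all_reals topology.
Set Implicit Arguments. Unset Strict Implicit. Unset Printing Implicit Defensive.
Import GRing.Theory.
Local Open Scope classical_set_scope.
Local Open Scope ring_scope.

Section Dynamics.
Context {T : zmodType}.

Definition is_action (Y : Type) (s : T -> Y -> Y) : Prop :=
  (forall y, s 0 y = y) /\ (forall (a b : T) y, s (a + b) y = s a (s b y)).

Definition continuous_action (Y : topologicalType) (s : T -> Y -> Y) : Prop :=
  is_action s /\ forall t, continuous (s t).

Definition minimal_action (Y : topologicalType) (s : T -> Y -> Y) : Prop :=
  forall A : set Y, closed A -> A !=set0 ->
    (forall t y, A y -> A (s t y)) -> A = setT.

(* x,y proximal: the orbit closure of (x,y) in Y x Y meets the diagonal *)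
Definition proximal (Y : topologicalType) (s : T -> Y -> Y) (x y : Y) : Prop :=
  exists z : Y, forall U, nbhs z U -> exists t, U (s t x) /\ U (s t y).

Definition distal (Y : topologicalType) (s : T -> Y -> Y) : Prop :=
  forall x y, proximal s x y -> x = y.

Definition equicontinuous_action (Y : uniformType) (s : T -> Y -> Y) : Prop :=
  forall U, entourage U -> exists2 V, entourage V &
    forall t y z, V (y, z) -> U (s t y, s t z).

Section Ellis.
Context {X : topologicalType} (s : T -> X -> X).

Definition ptws_closure (A : set (X -> X)) : set (X -> X) :=
  @closure {ptws X -> X} A.

Definition Ellis : set (X -> X) := ptws_closure (range s).

Definition left_ideal (I : set (X -> X)) : Prop :=
  I `<=` Ellis /\ I !=set0 /\ (forall f g, Ellis f -> I g -> I (f \o g)).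

Definition minimal_left_ideal (I : set (X -> X)) : Prop :=
  left_ideal I /\ forall J, left_ideal J -> J `<=` I -> J = I.

Definition minimal_idempotent (e : X -> X) : Prop :=
  Ellis e /\ e \o e = e /\ exists I, minimal_left_ideal I /\ I e.

Definition Lideal (e : X -> X) : set (X -> X) := [set f \o e | f in Ellis].
Definition Egroup (e : X -> X) : set (X -> X) := [set e \o f | f in Lideal e].

Definition minidem_semigroup : set (X -> X) :=
  [set f | forall S : set (X -> X), minimal_idempotent `<=` S ->
     (forall g h, S g -> S h -> S (g \o h)) -> S f].

Definition Gamma (e : X -> X) : set (X -> X) :=
  Egroup e `&` ptws_closure minidem_semigroup.

Definition closed_normal_subgroup (e : X -> X) (H : set (X -> X)) : Prop :=
  let G := Egroup e in
  H `<=` G /\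
  (exists C : set {ptws X -> X}, closed C /\ H = G `&` C) /\
  H e /\
  (forall h k, H h -> H k -> H (h \o k)) /\
  (forall h g, H h -> G g -> g \o h = e -> H g) /\
  (forall h g g', H h -> G g -> G g' -> g \o g' = e -> H (g \o h \o g')).

Definition factor_of_L (e : X -> X) (Z : uniformType) (sZ : T -> Z -> Z)
    (rho : (X -> X) -> Z) : Prop :=
  compact [set: Z] /\ hausdorff_space Z /\ continuous_action sZ /\
  {within (Lideal e : set {ptws X -> X}), continuous (rho : {ptws X -> X} -> Z)} /\
  rho @` Lideal e = setT /\
  (forall t f, Lideal e f -> rho (s t \o f) = sZ t (rho f)).

Definition equicontinuous_factor_of_L (e : X -> X) (Z : uniformType)
    (sZ : T -> Z -> Z) (rho : (X -> X) -> Z) : Prop :=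
  factor_of_L e sZ rho /\ equicontinuous_action sZ.

Definition max_equicontinuous_factor_of_L (e : X -> X) (Y : uniformType)
    (sY : T -> Y -> Y) (pi : (X -> X) -> Y) : Prop :=
  equicontinuous_factor_of_L e sY pi /\
  forall (Z : uniformType) (sZ : T -> Z -> Z) (rho : (X -> X) -> Z),
    equicontinuous_factor_of_L e sZ rho ->
    exists psi : Y -> Z, continuous psi /\
      forall f, Lideal e f -> rho f = psi (pi f).

End Ellis.

Definition rotation_group_structure (Y : uniformType) (sY : T -> Y -> Y)
    (add : Y -> Y -> Y) (opp : Y -> Y) (y0 : Y) : Prop :=
  (forall a b c, add a (add b c) = add (add a b) c) /\
  (forall a b, add a b = add b a) /\
  (forall a, add y0 a = a) /\
  (forall a, add (opp a) a = y0) /\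
  continuous (fun p : Y * Y => add p.1 p.2) /\
  continuous opp /\
  (forall t y, sY t y = add (sY t y0) y).

End Dynamics.

(* Main.v *)
Require Import Defs.
From HB Require Import structures.
From mathcomp Require Import all_boot all_order all_algebra.
From mathcomp Require Import all_classical all_reals topology.
Local Open Scope classical_set_scope.

Lemma agree_lemma (P Z : topologicalType) (hZ : hausdorff_space Z)
  (A D : set P) (p : P) (F1 F2 : P -> Z) :
  D `<=` A -> closure D p ->
  F1 @ within A (nbhs p) --> F1 p -> F2 @ within A (nbhs p) --> F2 p ->
  (forall d, D d -> F1 d = F2 d) -> F1 p = F2 p.
Proof.
move=> DA clD h1 h2 eqD; apply: hZ => U V hU hV.
have W1 : nbhs p [set y | A y -> U (F1 y)] := h1 _ hU.
have W2 : nbhs p [set y | A y -> V (F2 y)] := h2 _ hV.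
have [d [Dd [/(_ (DA _ Dd)) Ud /(_ (DA _ Dd)) Vd]]] := clD _ (filterI W1 W2).
by exists (F1 d); split => //; rewrite eqD.
Qed.

Lemma comp_within (P Y Z : topologicalType) (L A : set P) (G : P -> P)
  (pi : P -> Y) (K : Y -> Z) (p : P) :
  G @ nbhs p --> G p -> {within L, continuous pi} -> L (G p) ->
  (forall y, A y -> L (G y)) -> K @ nbhs (pi (G p)) --> K (pi (G p)) ->
  (fun y => K (pi (G y))) @ within A (nbhs p) --> K (pi (G p)).
Proof.
move=> hG /subspace_continuousP hpi LGp AL hK U hU.
have h1 := hK _ hU.
have h2 : nbhs (G p) [set y | L y -> U (K (pi y))] := hpi _ LGp _ h1.
have h3 : nbhs p [set y | L (G y) -> U (K (pi (G y)))] := hG _ h2.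
apply: filterS h3 => y /= H Ay; exact: H (AL _ Ay).
Qed.
Lemma ptws_cvg (X : topologicalType) (Phi : {ptws X -> X} -> {ptws X -> X})
  (p : {ptws X -> X}) :
  (forall x, (fun q => Phi q x) @ nbhs p --> Phi p x) -> Phi @ nbhs p --> Phi p.
Proof.
move=> h; apply/cvg_sup => i U [V] [[W] oW <-] WfN WU.
apply: (filterS WU); apply: (h i); exact: open_nbhs_nbhs.
Qed.

Lemma rcomp_cvg (X : topologicalType) (k : X -> X) (p : {ptws X -> X}) :
  (fun q : {ptws X -> X} => (q \o k : {ptws X -> X})) @ nbhs p --> (p \o k : {ptws X -> X}).
Proof.
apply: ptws_cvg => x /=.
exact: (@proj_continuous X (fun _ => X) (k x) p).
Qed.

Lemma lcomp_cvg (X : topologicalType) (g : X -> X) (p : {ptws X -> X}) :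
  continuous g ->
  (fun q : {ptws X -> X} => (g \o q : {ptws X -> X})) @ nbhs p --> (g \o p : {ptws X -> X}).
Proof.
move=> cg; apply: ptws_cvg => x /=.
apply: (@continuous_comp _ _ _ (fun q : {ptws X -> X} => q x) g).
  exact: (@proj_continuous X (fun _ => X) x p).
exact: cg.
Qed.

Lemma closure_map (P : topologicalType) (Phi : P -> P) (A B : set P) :
  (forall p, closure A p -> Phi @ nbhs p --> Phi p) ->
  (forall a, A a -> B (Phi a)) -> forall p, closure A p -> closure B (Phi p).
Proof.
move=> hc hAB p cp U hU.
have [a [Aa Ua]] := cp _ (hc _ cp _ hU).
by exists (Phi a); split => //; apply: hAB.
Qed.

Lemma Ellis_lcomp (T : zmodType) (X : topologicalType) (s : T -> X -> X) t phi :
  continuous_action s -> Ellis s phi -> Ellis s (s t \o phi).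
Proof.
move=> [[_ hact] hc] Ep.
apply: (@closure_map {ptws X -> X} (fun q : {ptws X -> X} => (s t \o q : {ptws X -> X}))
  (range s) (range s)) => //.
- by move=> p _; apply: lcomp_cvg.
- move=> a [u _ <-]; exists (t + u)%R => //.
  by apply: funext => x /=; rewrite hact.
Qed.

Lemma Ellis_comp (T : zmodType) (X : topologicalType) (s : T -> X -> X) phi psi :
  continuous_action s -> Ellis s phi -> Ellis s psi -> Ellis s (phi \o psi).
Proof.
move=> hs Ep Eq.
have -> : Ellis s = @closure {ptws X -> X} (Ellis s).
  by apply: (proj1 (@closure_id {ptws X -> X} (Ellis s))); apply: closed_closure.
apply: (@closure_map {ptws X -> X} (fun q : {ptws X -> X} => (q \o psi : {ptws X -> X}))
  (range s) (Ellis s)) => //.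
- by move=> p _; apply: rcomp_cvg.
- by move=> a [u _ <-]; apply: Ellis_lcomp.
Qed.

Theorem mainTheorem2 (T : zmodType) (X : topologicalType) (s : T -> X -> X)
  (hX_compact : compact [set: X]) (hX_haus : hausdorff_space X)
  (hs_act : continuous_action s) (hs_min : minimal_action s)
  (hs_notdistal : ~ distal s)
  (e : X -> X) (he : minimal_idempotent s e)
  (Y : uniformType) (sY : T -> Y -> Y) (pi : (X -> X) -> Y)
  (hpi : max_equicontinuous_factor_of_L s e sY pi)
  (add : Y -> Y -> Y) (opp : Y -> Y)
  (hgrp : rotation_group_structure sY add opp (pi e)) :
  (forall f g, Lideal s e f -> Lideal s e g -> pi (f \o g) = add (pi f) (pi g)) /\
  (forall f, Lideal s e f -> pi f = pi (e \o f)) /\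
  exists H : set (X -> X),
    [/\ closed_normal_subgroup s e H,
        Gamma s e `<=` H &
        forall f g, Lideal s e f -> Lideal s e g ->
          (pi f = pi g <-> exists2 h, H h & e \o f = (e \o g) \o h)].
Proof.
have [[[_ [hYh [_ [hpic [_ hpieq]]]]] _] _] := hpi.
have [gA [gC [gL [gV [gcont [_ gs]]]]]] := hgrp.
have [eE [ee [I [[[IE [Ine Icl]] Imin] Ie]]]] := he.
set y0 := pi e.
set L := Lideal s e.
have LE : forall f, L f -> Ellis s f.
  by move=> f [f' Ef' <-]; apply: Ellis_comp.
have Le : L e by exists e.
have Lfe : forall f, L f -> f \o e = f.
  by move=> f [f' Ef' <-]; rewrite -compA ee.
have Lcomp : forall phi f, Ellis s phi -> L f -> L (phi \o f).
  by move=> phi f Ep [f' Ef' <-]; exists (phi \o f') => //; apply: Ellis_comp.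
have LEe : forall phi, Ellis s phi -> L (phi \o e) by move=> phi Ep; exists phi.
have key : forall phi h, Ellis s phi -> L h ->
    pi (phi \o h) = add (pi (phi \o e)) (pi h).
  move=> phi h Ep Lh.
  apply: (@agree_lemma {ptws X -> X} Y hYh (Ellis s) (range s) phi
    (fun q => pi (q \o h)) (fun q => add (pi (q \o e)) (pi h))).
  - exact: subset_closure.
  - exact: Ep.
  - apply: (@comp_within {ptws X -> X} Y Y L (Ellis s)
      (fun q : {ptws X -> X} => (q \o h : {ptws X -> X})) pi id).
    + exact: rcomp_cvg.
    + exact: hpic.
    + exact: Lcomp.
    + by move=> y Ey; apply: Lcomp.
    + exact: cvg_id.
  - apply: (@comp_within {ptws X -> X} Y Y L (Ellis s)
      (fun q : {ptws X -> X} => (q \o e : {ptws X -> X})) pi (fun c => add c (pi h))).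
    + exact: rcomp_cvg.
    + exact: hpic.
    + exact: LEe.
    + by move=> y Ey; apply: LEe.
    + apply: (@continuous2_cvg _ Y Y Y _ _ id (fun=> pi h) add).
      * exact: (gcont (pi (phi \o e), pi h)).
      * exact: cvg_id.
      * exact: cvg_cst.
  - move=> d [t _ <-] /=.
    by rewrite hpieq // hpieq // gs.
have claim1 : forall f g, L f -> L g -> pi (f \o g) = add (pi f) (pi g).
  by move=> f g Lf Lg; rewrite key ?Lfe //; apply: LE.
have claim2 : forall f, L f -> pi f = pi (e \o f).
  by move=> f Lf; rewrite key // ee gL.
split => //; split => //.
set G := Egroup s e.
have GL : forall g, G g -> L g by move=> g [a La <-]; apply: Lcomp.
have Ge : G e by exists e.
have Gfe : forall g, G g -> g \o e = g by move=> g /GL; apply: Lfe.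
have eG : forall g, G g -> e \o g = g by move=> g [a La <-]; rewrite compA ee.
have Gcomp : forall g k, G g -> G k -> G (g \o k).
  move=> g k [a La <-] Gk; exists (a \o k) => //.
  by apply: Lcomp => //; [apply: LE | apply: GL].
have claim1G : forall g k, G g -> G k -> pi (g \o k) = add (pi g) (pi k).
  by move=> g k Gg Gk; apply: claim1; apply: GL.
have absorb : forall x, add x y0 = x by move=> x; rewrite gC gL.
have idem : forall x, add x x = x -> x = y0.
  move=> x hx.
  by rewrite /y0 -(gV x) -{3}hx gA gV gL.
pose H := [set h | G h /\ pi h = y0].
exists H; split.
- split; first by move=> h [].
  split.
    exists (@closure {ptws X -> X} H); split; first exact: closed_closure.
    apply/seteqP; split.
      by move=> h [Gh ph]; split => //; apply: subset_closure.
    move=> g [Gg cg]; split => //.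
    apply: (@agree_lemma {ptws X -> X} Y hYh L H g pi (fun=> y0)).
    + by move=> h [Gh _]; apply: GL.
    + exact: cg.
    + apply: (@comp_within {ptws X -> X} Y Y L L (fun q => q) pi id).
      * exact: cvg_id.
      * exact: hpic.
      * exact: GL.
      * by [].
      * exact: cvg_id.
    + exact: cvg_cst.
    + by move=> d [].
  split; first by split.
  split.
    move=> h k [Gh ph] [Gk pk]; split; first exact: Gcomp.
    by rewrite claim1G // ph pk absorb.
  split.
    move=> h g [Gh ph] Gg ghe; split => //.
    by rewrite -(absorb (pi g)) -ph -claim1G // ghe.
  move=> h g g' [Gh ph] Gg Gg' gge; split; first by apply: (Gcomp) => //; apply: (Gcomp).
  rewrite claim1G //; last exact: Gcomp.
  by rewrite claim1G // ph absorb -claim1G // gge.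
- move=> g [Gg cg]; split => //.
  have SE : forall f, minidem_semigroup s f -> Ellis s f /\ pi (f \o e) = y0.
    move=> f hf; apply: (hf [set f | Ellis s f /\ pi (f \o e) = y0]).
    + move=> u [Eu [uu _]]; split => //; apply: idem.
      rewrite -key //; last exact: LEe.
      by rewrite compA uu.
    + move=> a b [Ea pa] [Eb pb]; split; first exact: Ellis_comp.
      have -> : a \o b \o e = a \o (b \o e) by [].
      by rewrite key //; [rewrite pa pb absorb | apply: LEe].
  rewrite -(Gfe g Gg).
  apply: (@agree_lemma {ptws X -> X} Y hYh (Ellis s) (minidem_semigroup s) g
    (fun q => pi (q \o e)) (fun=> y0)).
  + by move=> f /SE [].
  + exact: cg.
  + apply: (@comp_within {ptws X -> X} Y Y L (Ellis s)
      (fun q : {ptws X -> X} => (q \o e : {ptws X -> X})) pi id).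
    * exact: rcomp_cvg.
    * exact: hpic.
    * by apply: LEe; apply: LE; apply: GL.
    * by move=> y Ey; apply: LEe.
    * exact: cvg_id.
  + exact: cvg_cst.
  + by move=> d /SE [].
- move=> f g Lf Lg; split; last first.
    move=> [h [Gh ph] eq].
    rewrite claim2 // eq claim1; [|exact: Lcomp|exact: GL].
    by rewrite -claim2 // ph absorb.
  move=> pfg.
  have Leq : L = I.
    apply: Imin; last by move=> f' [f'' Ef'' <-]; apply: Icl.
    split; first exact: LE.
    by split; [exists e | move=> phi f' Ep Lf'; apply: Lcomp].
  have linv : forall a, G a -> exists2 c, G c & c \o a = e.
    move=> a Ga.
    pose J := [set phi \o a | phi in L].
    have JI : J = I.
      apply: Imin; last by rewrite -Leq; move=> x [phi Lphi <-]; apply: Lcomp => //; [apply: LE | apply: GL].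
      split; first by move=> x [phi Lphi <-]; apply: Ellis_comp => //; apply: LE => //; apply: GL.
      split; first by exists (e \o a); exists e.
      move=> phi x Ep [psi Lpsi <-]; exists (phi \o psi) => //; exact: Lcomp.
    move: Ie; rewrite -JI => -[b Lb be].
    exists (e \o b); first by exists b.
    by rewrite -compA be ee.
  set u := e \o g.
  have Gu : G u by exists g.
  have [c Gc cu] := linv u Gu.
  have [d Gd dc] := linv c Gc.
  have uc : u \o c = e.
    have -> : u \o c = (d \o c) \o u \o c by rewrite dc (eG u Gu).
    have -> : (d \o c) \o u \o c = d \o ((c \o u) \o c) by [].
    by rewrite cu (eG c Gc) dc.
  exists (c \o (e \o f)).
    split; first by apply: Gcomp => //; exists f.
    rewrite claim1G //; last by exists f.
    rewrite -(claim2 f) // pfg (claim2 g) // -/u gC -claim1G //.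
    by rewrite uc.
  have -> : (e \o g) \o (c \o (e \o f)) = (u \o c) \o (e \o f) by [].
  by rewrite uc compA ee.
Qed.
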